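(* Let $V$ be a real vector space with a non-degenerate symmetric inner product of signature $(p,q)$ with $p\ge2$ and $q\ge2$. Then there exists a covariant derivative algebraic curvature tensor $\nabla R$ on $V$ such that $\mathcal{S}_{\nabla R}(v)^2=0$ for all $v\in V$ and such that $\mathcal{S}_{\nabla R}$ does not vanish identically.
   Context: A covariant derivative algebraic curvature tensor is $\nabla R\in\otimes^5V^*$ satisfying $\nabla R(a,b,c,d;e)=-\nabla R(b,a,c,d;e)=\nabla R(c,d,a,b;e)$, $\nabla R(a,b,c,d;e)+\nabla R(a,c,d,b;e)+\nabla R(a,d,b,c;e)=0$, and $\nabla R(a,b,c,d;e)+\nabla R(a,b,d,e;c)+\nabla R(a,b,e,c;d)=0$. The Szab\'o operator $\mathcal{S}_{\nabla R}(x)$ is the linear map of $V$ defined by $(\mathcal{S}_{\nabla R}(x)y,w)=\nabla R(y,x,x,w;x)$. *)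

(* Defs.v *)
From mathcomp Require Import all_boot all_order all_algebra.
From mathcomp Require Import reals.
Set Implicit Arguments. Unset Strict Implicit. Unset Printing Implicit Defensive.
Import Order.TTheory GRing.Theory Num.Theory.
Local Open Scope ring_scope.

(* An element of (x)^5 V^* is given by its
   components T i j k l m in the standard basis; it acts multilinearly. *)

Definition tensor5 (R : realType) (n : nat) :=
  'I_n -> 'I_n -> 'I_n -> 'I_n -> 'I_n -> R.

Definition tev (R : realType) (n : nat) (T : tensor5 R n)
  (a b c d e : 'rV[R]_n) : R :=
  \sum_(i < n) \sum_(j < n) \sum_(k < n) \sum_(l < n) \sum_(m < n)
     T i j k l m * a 0 i * b 0 j * c 0 k * d 0 l * e 0 m.

Definition is_cdact (R : realType) (n : nat) (T : tensor5 R n) : Prop :=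
  forall a b c d e : 'rV[R]_n,
    [/\ tev T a b c d e = - tev T b a c d e,
        tev T a b c d e = tev T c d a b e,
        tev T a b c d e + tev T a c d b e + tev T a d b c e = 0
      & tev T a b c d e + tev T a b d e c + tev T a b e c d = 0].

Definition ip (R : realType) (n : nat) (G : 'M[R]_n) (u w : 'rV[R]_n) : R :=
  (u *m G *m w^T) 0 0.

(* Szabo operator S(x), as a matrix acting on row vectors (y |-> y *m S):
   the unique linear map with ip G (y *m S) w = tev T y x x w x
   (G invertible). *)
Definition szabo (R : realType) (n : nat) (G : 'M[R]_n) (T : tensor5 R n)
  (x : 'rV[R]_n) : 'M[R]_n :=
  (\matrix_(i < n, j < n) tev T (delta_mx 0 i) x x (delta_mx 0 j) x) *m invmx G.

Definition has_signature (R : realType) (p q : nat) (G : 'M[R]_(p + q)) : Prop :=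
  exists P : 'M[R]_(p + q), P \in unitmx /\
    P *m G *m P^T = diag_mx (\row_(i < p + q) (if (i < p)%N then 1 else -1 : R)).
Arguments has_signature {R} p q G.

(* Main.v *)
Require Import Defs.
From mathcomp Require Import all_boot all_order all_algebra.
From mathcomp Require Import reals ring zify.
Import Order.TTheory GRing.Theory Num.Theory.
Local Open Scope ring_scope.
Set Implicit Arguments. Unset Strict Implicit.

Section S.
Variables (R : realType) (n : nat).
Implicit Types (a b x y z w v : 'rV[R]_n).

Definition lf a x : R := \sum_i a 0 i * x 0 i.
Definition Tab a b : tensor5 R n := fun i j k l m =>
  (a 0 i * b 0 j - b 0 i * a 0 j) * (a 0 k * b 0 l - b 0 k * a 0 l) * b 0 m.

Lemma sum2_split (f g : 'I_n -> R) :
  \sum_i \sum_j f i * g j = (\sum_i f i) * (\sum_j g j).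
Proof. by rewrite mulr_suml; apply eq_bigr => i _; rewrite mulr_sumr. Qed.

Lemma sum5_split (f g : 'I_n -> 'I_n -> R) (h : 'I_n -> R) :
  \sum_i \sum_j \sum_k \sum_l \sum_m f i j * g k l * h m =
  (\sum_i \sum_j f i j) * (\sum_k \sum_l g k l) * (\sum_m h m).
Proof.
rewrite -mulrA mulr_suml; apply eq_bigr => i _.
rewrite mulr_suml; apply eq_bigr => j _.
rewrite mulr_suml mulr_sumr; apply eq_bigr => k _.
rewrite mulr_suml mulr_sumr; apply eq_bigr => l _.
rewrite mulr_sumr mulr_sumr; apply eq_bigr => m _.
by rewrite mulrA.
Qed.

Lemma omegaE a b x y :
  \sum_i \sum_j (a 0 i * b 0 j - b 0 i * a 0 j) * x 0 i * y 0 j =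
  lf a x * lf b y - lf b x * lf a y.
Proof.
rewrite /lf -!sum2_split -sumrB; apply eq_bigr => i _.
rewrite -sumrB; apply eq_bigr => j _; ring.
Qed.

Lemma tevE a b x y z w v :
  tev (Tab a b) x y z w v =
  (lf a x * lf b y - lf b x * lf a y) * (lf a z * lf b w - lf b z * lf a w) * lf b v.
Proof.
rewrite -!omegaE /lf -sum5_split /tev /Tab.
apply eq_bigr => i _; apply eq_bigr => j _; apply eq_bigr => k _.
apply eq_bigr => l _; apply eq_bigr => m _; ring.
Qed.

Lemma cdact a b : is_cdact (Tab a b).
Proof. move=> x y z w v; rewrite !tevE; split; ring. Qed.

Lemma lfE a x : lf a x = (x *m a^T) 0 0.
Proof. by rewrite /lf !mxE; apply eq_bigr => i _; rewrite !mxE mulrC. Qed.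

Lemma lf_e a i : lf a 'e_i = a 0 i.
Proof. by rewrite lfE -rowE !mxE. Qed.

Lemma szaboM a b x :
  (\matrix_(i < n, j < n) tev (Tab a b) 'e_i x x 'e_j x) =
  (- lf b x) *: ((lf b x *: a - lf a x *: b)^T *m (lf b x *: a - lf a x *: b)).
Proof.
apply/matrixP => i j; rewrite !mxE tevE !lf_e big_ord1 !mxE; ring.
Qed.

Lemma nil_c (Gi : 'M[R]_n) a b x :
  a *m Gi *m a^T = 0 -> a *m Gi *m b^T = 0 -> b *m Gi *m a^T = 0 ->
  b *m Gi *m b^T = 0 ->
  let c := lf b x *: a - lf a x *: b in c *m Gi *m c^T = 0.
Proof.
move=> Haa Hab Hba Hbb c; rewrite /c linearB /= !linearZ /=.
rewrite !scalerN !mulmxDl !mulmxDr !mulNmx !mulmxN -?scalemxAl -?scalemxAr -?scalemxAl.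
by rewrite Haa Hab Hba Hbb !scaler0 !(oppr0, subr0, addr0).
Qed.

End S.

Theorem theorem1p7 (R : realType) (p q : nat) (G : 'M[R]_(p + q)) :
  (2 <= p)%N -> (2 <= q)%N ->
  G^T = G -> G \in unitmx -> has_signature p q G ->
  exists T : tensor5 R (p + q),
    [/\ is_cdact T,
        (forall v : 'rV[R]_(p + q), szabo G T v *m szabo G T v = 0)
      & exists v : 'rV[R]_(p + q), szabo G T v != 0].
Proof.
move=> hp hq _ Gu [P [Pu HP]].
set d := \row_(i < p + q) (if (i < p)%N then 1 else -1 : R) in HP.
set D := diag_mx d in HP.
have DD : D *m D = 1%:M.
  apply/matrixP=> i j; rewrite mul_diag_mx !mxE.
  case: eqP => [->|_]; last by rewrite mulr0n mulr0.
  by case: ifP => _; rewrite ?mulr1n ?mulr1 ?mulrNN ?mulr1.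
have GPt : G *m P^T = invmx P *m D by rewrite -HP -!mulmxA mulKmx.
have Gi : invmx G = P^T *m D *m P.
  have h : G *m (P^T *m D *m P) = 1%:M.
    by rewrite !mulmxA GPt -(mulmxA _ D D) DD mulmx1 (mulVmx Pu).
  by rewrite -[LHS]mulmx1 -h (mulmxA (invmx G)) (mulVmx Gu) mul1mx.
have key : forall u w : 'rV[R]_(p + q),
    u *m invmx P^T *m invmx G *m (w *m invmx P^T)^T = u *m D *m w^T.
  move=> u w; rewrite Gi trmx_mul trmx_inv trmxK !mulmxA.
  by rewrite mulmxKV ?unitmx_tr // mulmxK.
have eDe : forall i j, 'e_i *m D *m ('e_j)^T = (d 0 i *+ (i == j)) *: (delta_mx 0 0 : 'M[R]_1).
  move=> i j; rewrite -rowE row_diag_mx -scalemxAl trmx_delta mul_delta_mx_cond.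
  by rewrite -scalerMnr scalerMnl.
have h0 : (0 < p + q)%N by lia.
have h1 : (1 < p + q)%N by lia.
have h2 : (p < p + q)%N by lia.
have h3 : (p.+1 < p + q)%N by lia.
pose i0 := Ordinal h0; pose i1 := Ordinal h1; pose ip := Ordinal h2; pose ip1 := Ordinal h3.
have ne : forall (i j : 'I_(p + q)), (val i != val j) -> (i == j) = false.
  by move=> i j /negP nij; apply/negP => /eqP hij; apply: nij; rewrite hij.
have n01 : (i0 == i1) = false by apply: ne.
have n0p : (i0 == ip) = false by apply: ne => /=; lia.
have n0p1 : (i0 == ip1) = false by apply: ne.
have n1p : (i1 == ip) = false by apply: ne => /=; lia.
have n1p1 : (i1 == ip1) = false by apply: ne => /=; lia.
have npp1 : (ip == ip1) = false by apply: ne => /=; lia.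
have d0 : d 0 i0 = 1 by rewrite mxE /= ifT //; lia.
have d1 : d 0 i1 = 1 by rewrite mxE /= ifT //; lia.
have dp : d 0 ip = -1 by rewrite mxE /= ltnn.
have dp1 : d 0 ip1 = -1 by rewrite mxE /= ifF //; lia.
pose ua : 'rV[R]_(p + q) := 'e_i0 + 'e_ip.
pose ub : 'rV[R]_(p + q) := 'e_i1 + 'e_ip1.
have Haa : ua *m D *m ua^T = 0.
  rewrite /ua linearD /= !mulmxDl !mulmxDr !eDe.
  rewrite !eqxx n0p eq_sym n0p d0 dp /=.
  by rewrite !mulr1n !mulr0n !scale0r addr0 add0r -scalerDl subrr scale0r.
have n10 : (i1 == i0) = false by rewrite eq_sym.
have np0 : (ip == i0) = false by rewrite eq_sym.
have np10 : (ip1 == i0) = false by rewrite eq_sym.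
have np1 : (ip == i1) = false by rewrite eq_sym.
have np11 : (ip1 == i1) = false by rewrite eq_sym.
have np1p : (ip1 == ip) = false by rewrite eq_sym.
have Hbb : ub *m D *m ub^T = 0.
  rewrite /ub linearD /= !mulmxDl !mulmxDr !eDe.
  rewrite !eqxx n1p1 np11 d1 dp1 /=.
  by rewrite !mulr1n !mulr0n !scale0r addr0 add0r -scalerDl subrr scale0r.
have Hab : ua *m D *m ub^T = 0.
  rewrite /ua /ub linearD /= !mulmxDl !mulmxDr !eDe.
  by rewrite n01 n0p1 np1 npp1 !mulr0n !scale0r !addr0.
have Hba : ub *m D *m ua^T = 0.
  rewrite /ua /ub linearD /= !mulmxDl !mulmxDr !eDe.
  by rewrite n10 n1p np10 np1p !mulr0n !scale0r !addr0.
pose a := ua *m invmx P^T; pose b := ub *m invmx P^T.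
exists (Tab a b); split.
- exact: cdact.
- move=> v; rewrite /szabo szaboM.
  set c := (lf b v *: a - lf a v *: b).
  have hc : c *m invmx G *m c^T = 0.
    by apply: nil_c; rewrite /a /b key.
  have hX : c^T *m c *m invmx G *m c^T *m c = 0.
    transitivity (c^T *m (c *m invmx G *m c^T) *m c); first by rewrite !mulmxA.
    by rewrite hc mulmx0 mul0mx.
  rewrite -(scalemxAl (- lf b v) (c^T *m c) (invmx G)).
  set k := - lf b v; set Y := c^T *m c *m invmx G.
  rewrite -(scalemxAl k Y (k *: Y)) -(scalemxAr k Y Y) /Y !mulmxA hX.
  by rewrite mul0mx !scaler0.
have ex : forall u w : 'rV[R]_(p + q), (u *m P) *m (w *m invmx P^T)^T = u *m w^T.
  by move=> u w; rewrite trmx_mul trmx_inv trmxK mulmxA (mulmxK Pu).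
pose x : 'rV[R]_(p + q) := 'e_i1 *m P.
have la : lf a x = 0.
  rewrite lfE ex /ua linearD /= mulmxDr !trmx_delta !mul_delta_mx_cond n10 n1p /=.
  by rewrite !mulr0n addr0 mxE.
have lb : lf b x = 1.
  rewrite lfE ex /ub linearD /= mulmxDr !trmx_delta !mul_delta_mx_cond eqxx n1p1 /=.
  by rewrite mulr0n addr0 mulr1n !mxE.
exists x; rewrite /szabo szaboM la lb scale0r subr0 scale1r.
apply/negP => /eqP h.
have h' : a^T *m a = 0.
  have := congr1 (fun M => - (M *m G)) h.
  by rewrite mul0mx oppr0 -mulmxA (mulVmx Gu) mulmx1 scaleN1r opprK.
have a0 : a = 0.
  apply/rowP => i; have := congr1 (fun M : 'M[R]_(p + q) => M i i) h'.
  rewrite !mxE big_ord1 !mxE => /eqP; rewrite mulf_eq0 orbb => /eqP.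
  by [].
have : ua = a *m P^T by rewrite /a mulmxKV // unitmx_tr.
rewrite a0 mul0mx => hu.
have := congr1 (fun M : 'rV[R]_(p + q) => M 0 i0) hu.
by rewrite !mxE !eqxx n0p /= addr0 => /eqP; rewrite oner_eq0.
Qed.
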